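(* Let $(\mathbb{K}_{LC}\langle\langle X\rangle\rangle)^\times$ denote the set of invertible elements of the algebra $(\mathbb{K}_{LC}\langle\langle X\rangle\rangle,\sqcup\!\sqcup)$. The shuffle inverse $$(\mathbb{K}_{LC}\langle\langle X\rangle\rangle)^\times\to(\mathbb{K}_{LC}\langle\langle X\rangle\rangle)^\times,\quad c\mapsto (c,\emptyset)^{-1}\sum_{k\geq 0}(c')^{\sqcup\!\sqcup\, k},\qquad c'=\mathbf{1}-c/(c,\emptyset),$$ is well defined and continuous with respect to the Silva topology.
   Context: $\mathbb{K}\in\{\mathbb{R},\mathbb{C}\}$. $X=\{x_0,\ldots,x_m\}$ is a finite alphabet, $X^\ast$ its set of words (including the empty word $\emptyset$). For $M>0$, $\|c\|_{\ell_\infty,M}=\sup_\eta|(c,\eta)|/(M^{|\eta|}|\eta|!)$ on series $c\colon X^\ast\to\mathbb{K}$, and $\ell_{\infty,M}(X^\ast,\mathbb{K})$ is the Banach space of series with finite norm. $\mathbb{K}_{LC}\langle\langle X\rangle\rangle=\bigcup_{M>0}\ell_{\infty,M}(X^\ast,\mathbb{K})$ with the Silva topology, i.e. the locally convex inductive limit topology of these Banach spaces. $\mathbf{1}$ denotes the series $1\cdot\emptyset$. The shuffle product is the bilinear product determined on words by $(x_i\eta)\sqcup\!\sqcup(x_j\xi)=x_i(\eta\sqcup\!\sqcup(x_j\xi))+x_j((x_i\eta)\sqcup\!\sqcup\xi)$, $\eta\sqcup\!\sqcup\emptyset=\emptyset\sqcup\!\sqcup\eta=\eta$, extended bilinearly;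 its unit is $\mathbf{1}$, and the invertible elements are exactly the series with $(c,\emptyset)\neq0$. $(c')^{\sqcup\!\sqcup k}$ is the $k$-fold shuffle power. *)

(* Defs.v *)
(* K is a generic numFieldType; the theorem instantiates it
   with K = R and K = R[i] (= C) for an arbitrary realType R. *)
From HB Require Import structures.
From mathcomp Require Import all_boot all_order all_algebra.
From mathcomp Require Import reals complex.
Set Implicit Arguments. Unset Strict Implicit. Unset Printing Implicit Defensive.
Import Order.TTheory GRing.Theory Num.Theory.
Local Open Scope ring_scope.

Section Series.
Variables (K : numFieldType) (m : nat).

(* alphabet X = {x_0, ..., x_m}, words X^*, the empty word is [::] *)
Definition word := seq 'I_m.+1.
Definition series := word -> K.

(* shuffle of two words, as a list of words counted with multiplicity:
   (x_i u) ш (x_j v) = x_i (u ш x_j v) + x_j (x_i u ш v), u ш [] = [] ш u = u *)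
Fixpoint shw (u v : word) {struct u} : seq word :=
  match u with
  | [::] => [:: v]
  | a :: u' =>
      let fix shw_aux (v : word) : seq word :=
        match v with
        | [::] => [:: u]
        | b :: v' => map (cons a) (shw u' v) ++ map (cons b) (shw_aux v')
        end in shw_aux v
  end.

(* bilinear extension of the shuffle to series: only pairs of words (u,v)
   with |u| + |v| = |eta| can produce eta *)
Definition shuffle (c d : series) : series := fun eta =>
  \sum_(i < (size eta).+1) \sum_(u : i.-tuple 'I_m.+1)
    \sum_(v : (size eta - i).-tuple 'I_m.+1)
      c u * d v * (count_mem eta (shw u v))%:R.

Definition one : series := fun eta => if eta is [::] then 1 else 0.

Definition addS (c d : series) : series := fun eta => c eta + d eta.
Definition oppS (c : series) : series := fun eta => - c eta.
Definition scaleS (a : K) (c : series) : series := fun eta => a * c eta.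

Fixpoint shpow (c : series) (k : nat) : series :=
  if k is k'.+1 then shuffle c (shpow c k') else one.

Definition normM_le (M : K) (c : series) (r : K) : Prop :=
  forall eta : word, `|c eta| <= r * M ^+ size eta * (size eta)`!%:R.

Definition ell_inf (M : K) (c : series) : Prop := exists r : K, normM_le M c r.

Definition LC (c : series) : Prop := exists M : K, 0 < M /\ ell_inf M c.

Definition LCunit (c : series) : Prop :=
  LC c /\ exists d : series, LC d /\ shuffle c d = one /\ shuffle d c = one.

(* 0-neighbourhoods of a base of the locally convex inductive limit (Silva)
   topology: absolutely convex subsets V of K_LC<<X>> such that V meets each
   Banach space l_{oo,M} in a 0-neighbourhood (contains a norm ball). *)
Definition silva_zero_nbhd (V : series -> Prop) : Prop :=
  (forall c, V c -> LC c) /\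
  (forall c d (a b : K), V c -> V d -> `|a| + `|b| <= 1 ->
      V (addS (scaleS a c) (scaleS b d))) /\
  (forall M : K, 0 < M -> exists2 r : K, 0 < r &
      forall c, normM_le M c r -> V c).

Definition silva_open (O : series -> Prop) : Prop :=
  (forall c, O c -> LC c) /\
  forall c, O c -> exists V, silva_zero_nbhd V /\ forall v, V v -> O (addS c v).

Definition cprime (c : series) : series :=
  addS one (oppS (scaleS (c [::])^-1 c)).

(* the shuffle inverse (c,[::])^-1 sum_{k>=0} (c')^{ш k}, the sum taken
   coefficientwise; the k-th term has zero coefficient at eta when k > |eta|
   (this is asserted in the theorem), so the coefficientwise sum is finite. *)
Definition shinv (c : series) : series := fun eta =>
  (c [::])^-1 * \sum_(k < (size eta).+1) shpow (cprime c) k eta.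

Definition silva_continuous_on (U : series -> Prop) (f : series -> series) : Prop :=
  forall c, U c -> forall O, silva_open O -> O (f c) ->
    exists O', silva_open O' /\ O' c /\ forall d, U d -> O' d -> O (f d).

Definition prop3p6_statement : Prop :=
  (* the infinite sum is (coefficientwise) well defined *)
  (forall c, LCunit c -> forall eta (k : nat), (size eta < k)%N ->
      shpow (cprime c) k eta = 0) /\
  (forall c, LCunit c -> LCunit (shinv c)) /\
  silva_continuous_on LCunit shinv.

End Series.

(* Main.v *)
Require Import Defs.
From mathcomp Require Import all_boot all_order all_algebra.
From mathcomp Require Import reals complex.
From Stdlib Require Import FunctionalExtensionality.
From mathcomp Require Import zify ring.
From Stdlib Require Import Lia ClassicalEpsilon.
Set Implicit Arguments. Unset Strict Implicit. Unset Printing Implicit Defensive.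
Import Order.TTheory GRing.Theory Num.Theory.
Local Open Scope ring_scope.
Section Comb.
Variable m : nat.
Local Notation T := ('I_m.+1).
Local Notation word := (seq T).

Lemma shw_nil_r (u : word) : shw u [::] = [:: u].
Proof. by case: u. Qed.

Lemma shw_cons a (u : word) b (v : word) :
  shw (a :: u) (b :: v) = map (cons a) (shw u (b :: v)) ++ map (cons b) (shw (a :: u) v).
Proof. by []. Qed.

Lemma size_shw (u v : word) : all (fun w => size w == size u + size v)%N (shw u v).
Proof.
elim: u v => [|a u IHu] v; first by rewrite /= eqxx.
elim: v => [|b v IHv]; first by rewrite shw_nil_r /= addn0 eqxx.
rewrite shw_cons all_cat !all_map; apply/andP; split.
  apply/allP => w /(allP (IHu (b :: v))) /= /eqP ->; by rewrite addSn.
apply/allP => w /(allP IHv) /= /eqP ->; by rewrite addnS.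
Qed.

Lemma count_shw_size (eta u v : word) : (size u + size v != size eta)%N ->
  count_mem eta (shw u v) = 0%N.
Proof.
move=> H; apply/eqP; rewrite -leqn0 leqNgt -has_count; apply/hasPn => w Hw.
apply/negP => /eqP Ew; subst w.
by move: (allP (size_shw u v) _ Hw) => /eqP E; rewrite E eqxx in H.
Qed.

Lemma count_cons_map e (eta : word) a (L : seq word) :
  count_mem (e :: eta) (map (cons a) L) = ((a == e) * count_mem eta L)%N.
Proof.
elim: L => [|w L IH] /=; first by rewrite muln0.
rewrite IH eqseq_cons mulnDr; congr (_ + _)%N.
by case: (a == e); rewrite ?mul1n ?mul0n.
Qed.

Lemma sum_tupleS n (F : (n.+1).-tuple T -> nat) :
  (\sum_(t : (n.+1).-tuple T) F t = \sum_(a : T) \sum_(t : n.-tuple T) F [tuple of a :: t])%N.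
Proof.
rewrite pair_big /=.
rewrite (reindex (fun p : T * n.-tuple T => [tuple of p.1 :: p.2])) //=.
exists (fun t : (n.+1).-tuple T => (thead t, [tuple of behead t])).
  by move=> [a t] _ /=; rewrite theadE; congr (_, _); apply: val_inj.
by move=> t _; rewrite [RHS]tuple_eta; apply: val_inj.
Qed.

Lemma sum_tuple0 (R : nmodType) (F : 0.-tuple T -> R) : \sum_(t : 0.-tuple T) F t = F [tuple].
Proof. by rewrite (big_pred1 [tuple]) // => t; rewrite /= [t]tuple0; apply/esym/eqP. Qed.

Lemma sum_tuple_eq j (eta : word) :
  (\sum_(v : j.-tuple T) (tval v == eta) = (j == size eta))%N.
Proof.
case: (boolP (size eta == j)) => Hs.
  rewrite (bigD1 (Tuple Hs)) //= eqxx big1 ?addn0; first by rewrite (eqP Hs) eqxx.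
  by move=> v Hv; apply/eqP; rewrite eqb0; apply: contra Hv => /eqP Ev; apply/eqP/val_inj; by rewrite /= -Ev.
rewrite big1; last by move=> v _; apply/eqP; rewrite eqb0; apply: contra Hs => /eqP <-; rewrite size_tuple.
by rewrite eq_sym (negPf Hs).
Qed.

Lemma shw_count (eta : word) (i j : nat) :
  (\sum_(u : i.-tuple T) \sum_(v : j.-tuple T) count_mem eta (shw u v) =
   if (i + j == size eta) then 'C(i + j, i) else 0)%N.
Proof.
elim: eta i j => [|e eta IH] i j.
  case: i => [|i].
    rewrite sum_tuple0 /= add0n; under eq_bigr do rewrite addn0.
    by rewrite sum_tuple_eq bin0 eq_sym.
  rewrite /=; apply: big1 => u _; apply: big1 => v _; apply: count_shw_size.
  by rewrite !size_tuple.
case: i => [|i].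
  rewrite sum_tuple0 /= add0n bin0; under eq_bigr do rewrite addn0.
  by rewrite sum_tuple_eq eq_sym.
case: j => [|j].
  rewrite addn0 binn.
  under eq_bigr do rewrite sum_tuple0 shw_nil_r /= addn0.
  by rewrite sum_tuple_eq eq_sym.
rewrite sum_tupleS.
under eq_bigr do under eq_bigr do rewrite sum_tupleS.
have E : forall a (u : i.-tuple T) b (v : j.-tuple T),
   count_mem (e :: eta) (shw [tuple of a :: u] [tuple of b :: v]) =
   ((a == e) * count_mem eta (shw u [tuple of b :: v]) +
    (b == e) * count_mem eta (shw [tuple of a :: u] v))%N.
  move=> a u b v.
  have -> : shw [tuple of a :: u] [tuple of b :: v] = shw (a :: u) (b :: v) by [].
  by rewrite shw_cons count_cat !count_cons_map.
under eq_bigr do under eq_bigr do under eq_bigr do under eq_bigr do rewrite E.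
under eq_bigr do under eq_bigr do under eq_bigr do rewrite big_split /=.
under eq_bigr do under eq_bigr do rewrite big_split /=.
under eq_bigr do rewrite big_split /=.
rewrite big_split /=.
have -> : (\sum_(a : T) \sum_(u : i.-tuple T) \sum_(b : T) \sum_(v : j.-tuple T)
     (a == e) * count_mem eta (shw u [tuple of b :: v]) =
     \sum_(u : i.-tuple T) \sum_(v : (j.+1).-tuple T) count_mem eta (shw u v))%N.
  rewrite (bigD1 e) //= [X in (_ + X)%N]big1 ?addn0; last first.
    move=> a /negPf Ha; apply: big1 => u _; apply: big1 => b _; apply: big1 => v _.
    by rewrite Ha.
  apply: eq_bigr => u _; rewrite sum_tupleS; apply: eq_bigr => b _; apply: eq_bigr => v _.
  by rewrite eqxx mul1n.
have -> : (\sum_(a : T) \sum_(u : i.-tuple T) \sum_(b : T) \sum_(v : j.-tuple T)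
     (b == e) * count_mem eta (shw [tuple of a :: u] v) =
     \sum_(u : (i.+1).-tuple T) \sum_(v : j.-tuple T) count_mem eta (shw u v))%N.
  rewrite sum_tupleS; apply: eq_bigr => a _; apply: eq_bigr => u _.
  rewrite (bigD1 e) //= [X in (_ + X)%N]big1 ?addn0; last first.
    by move=> b /negPf Hb; apply: big1 => v _; rewrite Hb.
  by apply: eq_bigr => v _; rewrite eqxx mul1n.
rewrite !IH !addnS !addSn eqSS.
case: ifP => // _.
by rewrite [in RHS]binS addnC.
Qed.
End Comb.

Section Alg.
Variables (K : numFieldType) (m : nat).
Local Notation T := ('I_m.+1).
Local Notation word := (seq T).
Local Notation series := (series K m).

Lemma sum_tuple_pick j (eta : word) (F : word -> K) : size eta = j ->
  \sum_(v : j.-tuple T) F v * (count_mem eta [:: tval v])%:R = F eta.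
Proof.
move=> Hs; have Hs' : size eta == j by rewrite Hs.
rewrite (bigD1 (Tuple Hs')) //= eqxx /= big1 ?addr0 ?mulr1 //.
move=> v Hv; rewrite /= addn0.
case: eqP => [Ev|]; last by rewrite mulr0.
by case/eqP: Hv; apply/val_inj; rewrite /= Ev.
Qed.

Lemma shuffle_term0 (a b : series) (eta : word) :
  \sum_(u : 0.-tuple T) \sum_(v : (size eta - 0).-tuple T)
      a u * b v * (count_mem eta (shw u v))%:R = a [::] * b eta.
Proof.
rewrite sum_tuple0 /=.
under eq_bigr do rewrite -mulrA.
by rewrite -mulr_sumr sum_tuple_pick // subn0.
Qed.

Lemma shuffle_low (a b : series) (eta : word) :
  (forall v, (size v < size eta)%N -> b v = 0) ->
  shuffle a b eta = a [::] * b eta.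
Proof.
move=> Hb; rewrite /shuffle big_ord_recl shuffle_term0 big1 ?addr0 // => i _.
apply: big1 => u _; apply: big1 => v _; rewrite Hb ?mulr0 ?mul0r //.
rewrite size_tuple /= /bump /=; have := ltn_ord i; lia.
Qed.

Lemma shuffle_one_l (b : series) eta : shuffle (@Defs.one K m) b eta = b eta.
Proof.
rewrite /shuffle big_ord_recl shuffle_term0 /= mul1r big1 ?addr0 // => i _.
apply: big1 => u _; apply: big1 => v _.
by case: u => [[|x u] Hu] //=; rewrite !mul0r.
Qed.

Lemma shuffle_ext (a1 a2 b1 b2 : series) eta :
  (forall u, (size u <= size eta)%N -> a1 u = a2 u) ->
  (forall v, (size v <= size eta)%N -> b1 v = b2 v) ->
  shuffle a1 b1 eta = shuffle a2 b2 eta.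
Proof.
move=> Ha Hb; apply: eq_bigr => i _; apply: eq_bigr => u _; apply: eq_bigr => v _.
rewrite Ha ?Hb // size_tuple ?leq_subr //.
by rewrite -ltnS.
Qed.

Lemma shuffle_sumr (a : series) N (F : nat -> series) eta :
  shuffle a (fun v => \sum_(k < N) F k v) eta = \sum_(k < N) shuffle a (F k) eta.
Proof.
rewrite /shuffle.
under eq_bigr do under eq_bigr do under eq_bigr do rewrite mulr_sumr mulr_suml.
under eq_bigr do under eq_bigr do rewrite exchange_big.
under eq_bigr do rewrite exchange_big.
by rewrite exchange_big.
Qed.

Lemma shuffle_subr (a b1 b2 : series) eta :
  shuffle a (fun v => b1 v - b2 v) eta = shuffle a b1 eta - shuffle a b2 eta.
Proof.
rewrite /shuffle -sumrB; apply: eq_bigr => i _.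
rewrite -sumrB; apply: eq_bigr => u _.
rewrite -sumrB; apply: eq_bigr => v _.
by rewrite mulrBr mulrBl.
Qed.

Lemma shuffle_subl (a1 a2 b : series) eta :
  shuffle (fun u => a1 u - a2 u) b eta = shuffle a1 b eta - shuffle a2 b eta.
Proof.
rewrite /shuffle -sumrB; apply: eq_bigr => i _.
rewrite -sumrB; apply: eq_bigr => u _.
rewrite -sumrB; apply: eq_bigr => v _.
by rewrite !mulrBl.
Qed.

Lemma shuffle_scalel (al : K) (a b : series) eta :
  shuffle (fun u => al * a u) b eta = al * shuffle a b eta.
Proof.
rewrite /shuffle mulr_sumr; apply: eq_bigr => i _.
rewrite mulr_sumr; apply: eq_bigr => u _.
rewrite mulr_sumr; apply: eq_bigr => v _.
by rewrite !mulrA.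
Qed.

Lemma shuffle_zero (a b : series) k eta :
  a [::] = 0 -> (forall v, (size v < k)%N -> b v = 0) -> (size eta < k.+1)%N ->
  shuffle a b eta = 0.
Proof.
move=> Ha Hb He; apply: big1 => -[[|i] Hi] _; apply: big1 => u _; apply: big1 => v _.
  by rewrite (tuple0 u) /= Ha !mul0r.
rewrite Hb ?mulr0 ?mul0r // size_tuple /=; lia.
Qed.

Lemma shpow_zero (c : series) : c [::] = 0 ->
  forall k eta, (size eta < k)%N -> shpow c k eta = 0.
Proof.
move=> Hc; elim=> [|k IH] eta //= He.
exact: (shuffle_zero Hc IH).
Qed.

End Alg.

Section Alg2.
Variables (K : numFieldType) (m : nat).
Local Notation T := ('I_m.+1).
Local Notation word := (seq T).
Local Notation series := (series K m).

Lemma shuffle_scaler (al : K) (a b : series) eta :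
  shuffle a (fun v => al * b v) eta = al * shuffle a b eta.
Proof.
rewrite /shuffle mulr_sumr; apply: eq_bigr => i _.
rewrite mulr_sumr; apply: eq_bigr => u _.
rewrite mulr_sumr; apply: eq_bigr => v _.
by rewrite !mulrA [a u * al]mulrC.
Qed.

Lemma trunc_sum (F : nat -> K) N1 N2 : (forall k, (N1 <= k)%N -> F k = 0) -> (N1 <= N2)%N ->
  \sum_(k < N2) F k = \sum_(k < N1) F k.
Proof.
move=> HF H; rewrite [RHS](big_ord_widen N2) // [RHS]big_mkcond; apply: eq_bigr => k _.
by case: ifP => // /negbT; rewrite -leqNgt => Hk; rewrite HF.
Qed.

Lemma LCunit_c0 (c : series) : LCunit c -> c [::] != 0.
Proof.
move=> [_ [d [_ [H _]]]]; have := congr1 (fun f => f [::]) H.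
rewrite /= shuffle_low // => E; apply/eqP => E0; move: E; rewrite E0 mul0r.
by move/eqP; rewrite eq_sym oner_eq0.
Qed.

Lemma cprime0 (c : series) : c [::] != 0 -> cprime c [::] = 0.
Proof. by move=> H; rewrite /cprime /addS /oppS /scaleS /= mulVf // subrr. Qed.

Lemma shinv_right (c : series) : c [::] != 0 -> forall eta,
  shuffle c (shinv c) eta = @Defs.one K m eta.
Proof.
move=> H0 eta; set c0 := c [::]; set c' := cprime c.
have Hc : forall u, c u = c0 * (@Defs.one K m u - c' u).
  by move=> u; rewrite /c' /cprime /addS /oppS /scaleS opprD addrA subrr add0r opprK mulrA mulfV // mul1r.
have Z := shpow_zero (cprime0 H0).
rewrite (@shuffle_ext _ _ c (fun u => c0 * (fun u => @Defs.one K m u - c' u) u) (shinv c)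
   (fun v => c0^-1 * \sum_(k < (size eta).+1) shpow c' k v)); first last.
- move=> v Hv; rewrite /shinv; congr (_ * _); rewrite [RHS](@trunc_sum (fun k => shpow c' k v) (size v).+1) // => k Hk.
  by apply: Z.
- by move=> u _; rewrite Hc.
rewrite shuffle_scalel shuffle_subl shuffle_scaler shuffle_one_l shuffle_scaler shuffle_sumr.
rewrite -mulrBr mulrA mulfV // mul1r.
have -> : \sum_(k < (size eta).+1) shuffle c' (shpow c' k) eta =
          \sum_(k < (size eta).+1) shpow c' k.+1 eta by [].
rewrite big_ord_recl [X in _ - X]big_ord_recr /=; under eq_bigr do rewrite add0n.
rewrite opprD addrA addrK.
have := Z (size eta).+1 eta (ltnSn _); rewrite /= => ->; by rewrite subr0.
Qed.

Lemma shuffle_unique (c d1 d2 : series) : c [::] != 0 ->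
  (forall eta, shuffle c d1 eta = shuffle c d2 eta) -> forall eta, d1 eta = d2 eta.
Proof.
move=> H0 Hs.
suff : forall n eta, (size eta <= n)%N -> d1 eta - d2 eta = 0.
  by move=> S eta; apply/eqP; rewrite -subr_eq0; apply/eqP/(S (size eta)).
elim=> [|n IH] eta He.
  have := Hs eta; move/eqP; rewrite -subr_eq0 -shuffle_subr shuffle_low.
    by rewrite mulf_eq0 (negPf H0) /= => /eqP.
  by move=> v Hv; move: (leq_trans Hv He).
have := Hs eta; move/eqP; rewrite -subr_eq0 -shuffle_subr shuffle_low.
  by rewrite mulf_eq0 (negPf H0) /= => /eqP.
move=> v Hv; apply: IH; rewrite -ltnS (leq_trans Hv) //.
Qed.

Lemma part1 : forall c : series, LCunit c -> forall eta (k : nat), (size eta < k)%N ->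
      shpow (cprime c) k eta = 0.
Proof. by move=> c /LCunit_c0 H eta k; apply: shpow_zero; apply: cprime0. Qed.

Lemma shinv_eq (c d : series) : c [::] != 0 -> shuffle c d = @Defs.one K m -> shinv c = d.
Proof.
move=> H0 Hd; apply: functional_extensionality; apply: (shuffle_unique H0) => eta.
by rewrite shinv_right // Hd.
Qed.

Lemma part2 : forall c : series, LCunit c -> LCunit (shinv c).
Proof.
move=> c Hc; have H0 := LCunit_c0 Hc.
case: Hc => Lc [d [Ld [H1 H2]]].
rewrite (shinv_eq H0 H1); split => //; exists c; split => //.
Qed.

End Alg2.
Section Est.
Variables (K : numFieldType) (m : nat).
Local Notation T := ('I_m.+1).
Local Notation word := (seq T).
Local Notation series := (series K m).

Definition bnd (a : series) (p : nat -> K) :=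
  forall eta : word, `|a eta| <= p (size eta) * (size eta)`!%:R.

Lemma shuffle_bound (a b : series) (p q : nat -> K) :
  (forall n, 0 <= p n) -> (forall n, 0 <= q n) -> bnd a p -> bnd b q ->
  bnd (shuffle a b) (fun n => \sum_(i < n.+1) p i * q (n - i)%N).
Proof.
move=> p0 q0 Ha Hb eta; set n := size eta.
rewrite /shuffle; apply: le_trans (ler_norm_sum _ _ _) _.
rewrite mulr_suml; apply: ler_sum => i _.
apply: le_trans (ler_norm_sum _ _ _) _.
set X := p i * q (n - i)%N * (i`! * (n - i)`!)%:R.
have HX : 0 <= X by rewrite mulr_ge0 // mulr_ge0.
apply: (@le_trans _ _ (\sum_(u : i.-tuple T) \sum_(v : (n - i).-tuple T)
     X * (count_mem eta (shw u v))%:R)).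
  apply: ler_sum => u _; apply: le_trans (ler_norm_sum _ _ _) _.
  apply: ler_sum => v _.
  rewrite !normrM normr_nat ler_wpM2r // /X natrM mulrACA.
  apply: ler_pM => //.
  - by have := Ha u; rewrite size_tuple.
  - by have := Hb v; rewrite size_tuple.
under eq_bigr do rewrite -mulr_sumr -natr_sum.
rewrite -mulr_sumr -natr_sum shw_count.
have Hi : (i <= n)%N by rewrite -ltnS.
rewrite subnKC // eqxx /X -mulrA -natrM mulnC bin_fact //.
Qed.


Lemma normM_le_mono M (a : series) r r' : 0 <= M -> r <= r' -> normM_le M a r -> normM_le M a r'.
Proof.
move=> M0 rr H eta; apply: le_trans (H eta) _.
by rewrite ler_wpM2r // ler_wpM2r // exprn_ge0.
Qed.

Lemma geo_sum (b : K) n : 1 < b -> \sum_(i < n) b ^+ (n.-1 - i) <= b ^+ n / (b - 1).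
Proof.
move=> b1; have b10 : 0 < b - 1 by rewrite subr_gt0.
have := subrXX b 1 n; rewrite expr1n.
under eq_bigr do rewrite expr1n mulr1.
move=> E; rewrite ler_pdivlMr // mulrC -E gerBl //.
Qed.

Lemma shuffle_geo (a b : series) (M r be rho : K) : 0 < M -> 1 < be -> 0 <= r -> 0 <= rho ->
  a [::] = 0 -> normM_le M a r -> normM_le (be * M) b rho ->
  normM_le (be * M) (shuffle a b) (r / (be - 1) * rho).
Proof.
move=> M0 b1 r0 rho0 a0 Ha Hb.
have be0 : 0 < be by apply: lt_trans b1.
have bM0 : 0 < be * M by rewrite mulr_gt0.
pose p := fun i : nat => if i == 0%N then 0 else r * M ^+ i.
pose q := fun n : nat => rho * (be * M) ^+ n.
have p0 : forall n, 0 <= p n.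
  by move=> [|n]; rewrite /p //= mulr_ge0 // exprn_ge0 // ltW.
have q0 : forall n, 0 <= q n by move=> n; rewrite /q mulr_ge0 // exprn_ge0 // ltW.
have Hp : bnd a p.
  by move=> [|e eta]; [rewrite a0 normr0 /p /= mul0r | exact: Ha].
have Hq : bnd b q by move=> eta; exact: Hb.
move=> eta; apply: le_trans (shuffle_bound p0 q0 Hp Hq eta) _.
rewrite ler_wpM2r //; set n := size eta.
rewrite big_ord_recl /p /= mul0r add0r.
have E : forall i : 'I_n, r * M ^+ (bump 0 i) * q (n - bump 0 i)%N =
    r * rho * M ^+ n * be ^+ (n.-1 - i).
  move=> i; have Hi := ltn_ord i; rewrite /bump /= add1n /q exprMn.
  have -> : (n - i.+1 = n.-1 - i)%N by lia.
  have -> : M ^+ n = M ^+ i.+1 * M ^+ (n.-1 - i) by rewrite -exprD; congr (_ ^+ _); lia.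
  ring.
rewrite (eq_bigr _ (fun i _ => E i)) -mulr_sumr.
have -> : r / (be - 1) * rho * (be * M) ^+ n = r * rho * M ^+ n * (be ^+ n / (be - 1)).
  rewrite exprMn; ring.
rewrite ler_wpM2l ?geo_sum // mulr_ge0 ?exprn_ge0 ?mulr_ge0 // ltW //.
Qed.

End Est.

Section Est2.
Variables (K : numFieldType) (m : nat).
Local Notation T := ('I_m.+1).
Local Notation word := (seq T).
Local Notation series := (series K m).

Lemma normM_le_add M (a b c : series) r1 r2 : (forall eta, c eta = a eta + b eta) ->
  normM_le M a r1 -> normM_le M b r2 -> normM_le M c (r1 + r2).
Proof.
move=> E Ha Hb eta; rewrite E; apply: le_trans (ler_normD _ _) _.
by rewrite !mulrDl lerD.
Qed.

Lemma one_bound M : 0 <= M -> normM_le M (@Defs.one K m) 1.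
Proof.
move=> M0 [|e eta] /=; first by rewrite normr1 !mul1r.
by rewrite normr0 mul1r mulr_ge0 // exprn_ge0.
Qed.

Lemma shpow_geo (x : series) M r : 0 < M -> 0 < r -> x [::] = 0 -> normM_le M x r ->
  forall k, normM_le ((1 + 4 * r) * M) (shpow x k) ((4^-1) ^+ k).
Proof.
move=> M0 r0 x0 Hx; have b1 : 1 < 1 + 4 * r by rewrite ltrDl mulr_gt0.
elim=> [|k IH] /=.
  by rewrite expr0; apply: one_bound; rewrite ltW // mulr_gt0 // (lt_trans _ b1).
have := shuffle_geo M0 b1 (ltW r0) _ x0 Hx IH; rewrite exprn_ge0 ?invr_ge0 ?ler0n //.
have -> : r / (1 + 4 * r - 1) * 4^-1 ^+ k = 4^-1 ^+ k.+1.
  rewrite exprS; field.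
  by rewrite addrAC subrr add0r mulf_neq0 ?pnatr_eq0 // gt_eqF.
by apply.
Qed.


Lemma shpow_diff (x z : series) M r s : 0 < M -> 0 < r -> 0 <= s ->
  x [::] = 0 -> z [::] = 0 -> normM_le M x r -> normM_le M z r ->
  normM_le M (fun u => z u - x u) s ->
  forall k, normM_le ((1 + 4 * r) * M) (fun eta => shpow z k eta - shpow x k eta)
                     (s / r * (2^-1) ^+ k).
Proof.
move=> M0 r0 s0 x0 z0 Hx Hz Hd; have b1 : 1 < 1 + 4 * r by rewrite ltrDl mulr_gt0.
have bM0 : 0 <= (1 + 4 * r) * M by rewrite ltW // mulr_gt0 // (lt_trans _ b1).
have r4 : 1 + 4 * r - 1 = 4 * r by rewrite addrAC subrr add0r.
elim=> [|k IH].
  move=> eta /=; rewrite subrr normr0 mulr_ge0 // mulr_ge0 ?exprn_ge0 //.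
  by rewrite mulr_ge0 // divr_ge0 // ltW.
have q4 : 0 <= (4^-1 : K) ^+ k by rewrite exprn_ge0 // invr_ge0 ler0n.
have q2 : 0 <= s / r * (2^-1 : K) ^+ k by rewrite mulr_ge0 ?divr_ge0 ?(ltW r0) // exprn_ge0 // invr_ge0 ler0n.
have hd0 : (fun u => z u - x u) [::] = 0 by rewrite /= x0 z0 subrr.
have HA := shuffle_geo M0 b1 s0 q4 hd0 Hd (shpow_geo M0 r0 z0 Hz k).
have HB := shuffle_geo M0 b1 (ltW r0) q2 x0 Hx IH.
have Hsp : forall eta, (fun eta => shpow z k.+1 eta - shpow x k.+1 eta) eta =
   shuffle (fun u => z u - x u) (shpow z k) eta +
   shuffle x (fun eta => shpow z k eta - shpow x k eta) eta.
  move=> eta /=; rewrite shuffle_subl shuffle_subr.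
  by rewrite addrA subrK.
have HAB := normM_le_add Hsp HA HB.
apply: normM_le_mono HAB => //.
- rewrite r4.
  have e1 : s / (4 * r) * 4^-1 ^+ k = s / r * 4^-1 * 4^-1 ^+ k.
    by field; rewrite gt_eqF.
  have e2 : r / (4 * r) * (s / r * 2^-1 ^+ k) = s / r * 4^-1 * 2^-1 ^+ k.
    by field; rewrite gt_eqF.
  have e3 : s / r * 2^-1 ^+ k.+1 = s / r * 4^-1 * 2^-1 ^+ k + s / r * 4^-1 * 2^-1 ^+ k.
    by rewrite exprS; field; rewrite gt_eqF.
  rewrite e1 e2 e3 lerD // ler_wpM2l ?mulr_ge0 ?divr_ge0 ?invr_ge0 ?ler0n ?(ltW r0) //.
  apply: lerXn2r; rewrite ?nnegrE ?invr_ge0 ?ler0n //.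
  by rewrite lef_pV2 ?posrE ?ltr0n ?ler_nat.
Qed.

End Est2.

Section Lip.
Variables (K : numFieldType) (m : nat).
Local Notation T := ('I_m.+1).
Local Notation word := (seq T).
Local Notation series := (series K m).

Lemma geo_half N : \sum_(k < N) (2^-1 : K) ^+ k <= 2.
Proof.
suff E : \sum_(k < N) (2^-1 : K) ^+ k = 2 - 2 * 2^-1 ^+ N.
  by rewrite E gerBl mulr_ge0 // exprn_ge0 // invr_ge0 ler0n.
elim: N => [|N IH]; first by rewrite big_ord0 expr0 mulr1 subrr.
rewrite big_ord_recr /= IH exprS.
by field.
Qed.

Lemma inv_le (g y : K) : 0 < g -> g <= `|y| -> `|y^-1| <= g^-1.
Proof.
move=> g0 H; rewrite normfV lef_pV2 // posrE //; exact: lt_le_trans H.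
Qed.

Lemma cprime_bound (c : series) M C g : 0 <= M -> 0 < C -> 0 < g -> g <= `|c [::]| ->
  normM_le M c C -> normM_le M (cprime c) (C / g).
Proof.
move=> M0 C0 g0 Hg Hc; have c0 : c [::] != 0 by rewrite -normr_gt0 (lt_le_trans g0 Hg).
move=> [|e eta].
  by rewrite cprime0 // normr0 /= expr0 mulr1 mulr1 divr_ge0 // ltW.
rewrite /cprime /addS /oppS /scaleS /= add0r normrN normrM.
apply: le_trans (ler_pM _ _ (inv_le g0 Hg) (Hc (e :: eta))) _ => //.
by rewrite le_eqVlt; apply/orP; left; apply/eqP; rewrite /=; ring.
Qed.

Definition Lc (C g : K) := 2 / g ^+ 2 + 2 * (C / g ^+ 2 + g^-1) / (C / g) / g.

Lemma lip (M C g t : K) (x z : series) : 0 < M -> 0 < C -> 0 < g -> 0 <= t ->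
  normM_le M x C -> normM_le M z C -> normM_le M (fun u => z u - x u) t ->
  g <= `|x [::]| -> g <= `|z [::]| ->
  normM_le ((1 + 4 * (C / g)) * M) (fun eta => shinv z eta - shinv x eta) (t * Lc C g).
Proof.
move=> M0 C0 g0 t0 Hx Hz Hd Hgx Hgz.
set x0 := x [::]; set z0 := z [::].
have x0n : x0 != 0 by rewrite -normr_gt0 (lt_le_trans g0 Hgx).
have z0n : z0 != 0 by rewrite -normr_gt0 (lt_le_trans g0 Hgz).
set r := C / g; have r0 : 0 < r by rewrite divr_gt0.
have Hx' := cprime_bound (ltW M0) C0 g0 Hgx Hx.
have Hz' := cprime_bound (ltW M0) C0 g0 Hgz Hz.
have Hzx : `|z0 - x0| <= t by have := Hd [::]; rewrite /= expr0 !mulr1.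
have Hinv : `|x0^-1 - z0^-1| <= t / g ^+ 2.
  rewrite (_ : x0^-1 - z0^-1 = (z0 - x0) * (x0^-1 * z0^-1)); last by field; rewrite x0n z0n.
  rewrite normrM normrM; apply: ler_pM => //; first by rewrite mulr_ge0.
  rewrite expr2 invfM; apply: ler_pM => //; exact: inv_le.
set s := t * (C / g ^+ 2 + g^-1).
have s0 : 0 <= s by rewrite mulr_ge0 // addr_ge0 ?divr_ge0 ?exprn_ge0 ?invr_ge0 // ltW.
have Hd' : normM_le M (fun u => cprime z u - cprime x u) s.
  move=> [|e eta]; first by rewrite cprime0 // cprime0 // subrr normr0 /= expr0 !mulr1.
  rewrite /cprime /addS /oppS /scaleS /= !add0r opprK.
  rewrite (_ : - (z0^-1 * z (e :: eta)) + x0^-1 * x (e :: eta) =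
     (x0^-1 - z0^-1) * x (e :: eta) - z0^-1 * (z (e :: eta) - x (e :: eta))); last by ring.
  apply: le_trans (ler_normB _ _) _.
  rewrite normrM normrM /s mulrDr !mulrDl.
  apply: lerD.
    apply: le_trans (ler_pM _ _ Hinv (Hx (e :: eta))) _ => //.
    by rewrite le_eqVlt; apply/orP; left; apply/eqP; field; rewrite gt_eqF.
  apply: le_trans (ler_pM _ _ (inv_le g0 Hgz) (Hd (e :: eta))) _ => //.
  by rewrite le_eqVlt; apply/orP; left; apply/eqP; ring.
have HZ := shpow_geo M0 r0 (cprime0 z0n) Hz'.
have HD := shpow_diff M0 r0 s0 (cprime0 x0n) (cprime0 z0n) Hx' Hz' Hd'.
move=> eta; set n := size eta; set W := ((1 + 4 * r) * M) ^+ n * n`!%:R.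
have W0 : 0 <= W by rewrite mulr_ge0 // exprn_ge0 // ltW // mulr_gt0 // ltr_pwDl // mulr_ge0 // ltW.
rewrite /shinv -/x0 -/z0.
rewrite (_ : z0^-1 * _ - x0^-1 * _ =
   (z0^-1 - x0^-1) * (\sum_(k < n.+1) shpow (cprime z) k eta) +
   x0^-1 * (\sum_(k < n.+1) (shpow (cprime z) k eta - shpow (cprime x) k eta))); last first.
  by rewrite sumrB; ring.
apply: le_trans (ler_normD _ _) _.
have -> : t * Lc C g * ((1 + 4 * r) * M) ^+ n * n`!%:R =
   t / g ^+ 2 * (2 * W) + g^-1 * (s / r * (2 * W)).
  by rewrite /Lc /W /s /r; field; rewrite !gt_eqF.
rewrite !normrM; apply: lerD; apply: ler_pM => //.
- by rewrite distrC.
- apply: le_trans (ler_norm_sum _ _ _) _.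
  apply: (@le_trans _ _ (\sum_(k < n.+1) (4^-1) ^+ k * W)).
    by apply: ler_sum => k _; rewrite /W mulrA; exact: HZ.
  rewrite -mulr_suml ler_wpM2r //.
  apply: le_trans (geo_half n.+1).
  apply: ler_sum => k _; apply: lerXn2r; rewrite ?nnegrE ?invr_ge0 ?ler0n //.
  by rewrite lef_pV2 ?posrE ?ltr0n ?ler_nat.
- exact: inv_le.
- apply: le_trans (ler_norm_sum _ _ _) _.
  apply: (@le_trans _ _ (\sum_(k < n.+1) s / r * ((2^-1) ^+ k * W))).
    by apply: ler_sum => k _; have := HD k eta; rewrite /W -!mulrA.
  rewrite -mulr_sumr ler_wpM2l ?divr_ge0 ?(ltW r0) ?(ltW C0) ?(ltW g0) //.
  rewrite -mulr_suml ler_wpM2r //; exact: geo_half.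
Qed.

End Lip.

Section Topo1.
Variables (K : numFieldType) (m : nat).
Local Notation T := ('I_m.+1).
Local Notation word := (seq T).
Local Notation series := (series K m).

Lemma normM_le_r0 M (a : series) r : normM_le M a r -> 0 <= r.
Proof. by move=> H; have := H [::]; rewrite /= expr0 !mulr1; apply: le_trans. Qed.

Lemma normM_le_Mmono M M' (a : series) r : 0 <= M -> M <= M' -> normM_le M a r -> normM_le M' a r.
Proof.
move=> M0 MM H eta; apply: le_trans (H eta) _.
rewrite ler_wpM2r // ler_wpM2l ?(normM_le_r0 H) //.
by apply: lerXn2r; rewrite ?nnegrE // (le_trans M0).
Qed.

Lemma normM_le_ext M (a b : series) r : (forall eta, a eta = b eta) -> normM_le M a r -> normM_le M b r.
Proof. by move=> E H eta; rewrite -E. Qed.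

Lemma normM_le_sum M N (a : nat -> series) (r : nat -> K) :
  (forall p, (p < N)%N -> normM_le M (a p) (r p)) ->
  normM_le M (fun eta => \sum_(p < N) a p eta) (\sum_(p < N) r p).
Proof.
move=> H eta; apply: le_trans (ler_norm_sum _ _ _) _.
rewrite !mulr_suml; apply: ler_sum => p _; exact: (H p (ltn_ord p) eta).
Qed.

Lemma normM_le_scale M (a : series) r (al : K) :
  normM_le M a r -> normM_le M (scaleS al a) (`|al| * r).
Proof.
by move=> H eta; rewrite /scaleS normrM -!mulrA ler_wpM2l // mulrA; apply: H.
Qed.

Lemma LC_comb (a b : series) (al be : K) : LC a -> LC b -> LC (addS (scaleS al a) (scaleS be b)).
Proof.
move=> [Ma [Ma0 [ra Ha]]] [Mb [Mb0 [rb Hb]]].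
exists (Ma + Mb); split; first by rewrite addr_gt0.
exists (`|al| * ra + `|be| * rb); apply: (normM_le_add (a := scaleS al a) (b := scaleS be b)) => //.
  by apply: normM_le_scale; apply: (normM_le_Mmono (ltW Ma0) _ Ha); rewrite lerDl ltW.
by apply: normM_le_scale; apply: (normM_le_Mmono (ltW Mb0) _ Hb); rewrite lerDr ltW.
Qed.

Lemma sum_cut (f : nat -> K) N1 N : (N1 <= N)%N ->
  \sum_(p < N) (if (p < N1)%N then f p else 0) = \sum_(p < N1) f p.
Proof.
move=> H; rewrite (@trunc_sum _ (fun p => if (p < N1)%N then f p else 0) N1 N) //.
  by apply: eq_bigr => p _; rewrite ltn_ord.
by move=> k Hk; rewrite ltnNge Hk.
Qed.

Lemma sum_prefix (f : nat -> K) j N : (forall p, 0 <= f p) -> (j <= N)%N ->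
  \sum_(p < j) f p <= \sum_(p < N) f p.
Proof.
move=> f0 H; rewrite -(sum_cut f H); apply: ler_sum => p _.
by case: ifP.
Qed.

Lemma scale_back (S s v B : K) : 0 <= s -> s <= S -> `|v| <= s * B -> S * (S^-1 * v) = v.
Proof.
move=> s0 sS Hv; case: (eqVneq S 0) => [S0|Sn]; last by rewrite mulVKf.
subst S; have s00 : s = 0 by apply/le_anti; rewrite sS s0.
by move: Hv; rewrite s00 mul0r normr_le0 => /eqP ->; rewrite !mulr0.
Qed.

Lemma Vcomb (V : series -> Prop) (Mv eps : nat -> K) :
  (forall c d (a b : K), V c -> V d -> `|a| + `|b| <= 1 -> V (addS (scaleS a c) (scaleS b d))) ->
  (forall j c, normM_le (Mv j) c (eps j) -> V c) ->
  (forall j, 0 < eps j) -> (forall j, 0 <= Mv j) ->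
  forall N (b : nat -> series) (s : nat -> K), (forall j, 0 <= s j) ->
  (forall j, normM_le (Mv j) (b j) (s j * eps j)) -> \sum_(j < N) s j <= 1 ->
  V (fun eta => \sum_(j < N) b j eta).
Proof.
move=> Hconv Hball eps0 Mv0; elim=> [|N IH] b s s0 Hb Hs.
  apply: (Hball 0%N) => eta; rewrite big_ord0 normr0 mulr_ge0 // mulr_ge0 ?exprn_ge0 //.
  exact: ltW.
set S := \sum_(j < N) s j.
have S0 : 0 <= S by apply: sumr_ge0.
have sS : forall j, (j < N)%N -> s j <= S.
  move=> j Hj; rewrite /S (bigD1 (Ordinal Hj)) //= lerDl sumr_ge0 //.
set x := fun eta => \sum_(j < N) S^-1 * b j eta.
have Hx : V x.
  apply: (IH (fun j => fun eta => S^-1 * b j eta) (fun j => s j * S^-1)).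
  - by move=> j; rewrite mulr_ge0 // invr_ge0.
  - move=> j eta; rewrite normrM ger0_norm ?invr_ge0 //.
    by rewrite [s j / S]mulrC -!mulrA ler_wpM2l ?invr_ge0 // !mulrA; apply: Hb.
  - rewrite -mulr_suml -/S; case: (eqVneq S 0) => [->|Sn]; first by rewrite mul0r ler01.
    by rewrite mulfV.
have Hy : V (fun eta => (s N)^-1 * b N eta).
  apply: (Hball N) => eta; rewrite normrM ger0_norm ?invr_ge0 //.
  case: (eqVneq (s N) 0) => [s0N|sNn].
    by rewrite s0N invr0 mul0r mulr_ge0 // mulr_ge0 ?exprn_ge0 // ltW.
  have sN0 : 0 < s N by rewrite lt_def sNn s0.
  by rewrite ler_pdivrMl // !mulrA; apply: Hb.
have HS : `|S| + `|s N| <= 1 by rewrite !ger0_norm //; move: Hs; rewrite big_ord_recr.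
have := Hconv _ _ _ _ Hx Hy HS.
congr V; apply: functional_extensionality => eta.
rewrite /addS /scaleS /x big_ord_recr /=; congr (_ + _).
  rewrite mulr_sumr; apply: eq_bigr => j _.
  have := Hb j eta; rewrite -!mulrA => H.
  exact: (scale_back (s0 j) (sS _ (ltn_ord j)) H).
have := Hb N eta; rewrite -!mulrA => H.
exact: (scale_back (s0 N) (lexx _) H).
Qed.

End Topo1.

Section Topo2.
Variables (K : numFieldType) (m : nat).
Local Notation T := ('I_m.+1).
Local Notation word := (seq T).
Local Notation series := (series K m).

Lemma zn_zero (V : series -> Prop) : silva_zero_nbhd V -> V (fun _ => 0).
Proof.
move=> [_ [_ Hb]]; have [r r0 Hr] := Hb 1 ltr01; apply: Hr => eta.
by rewrite normr0 expr1n mulr1 mulr_ge0 // ltW.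
Qed.

Lemma zn_half_add (V : series -> Prop) v v' : silva_zero_nbhd V ->
  V (scaleS 2 v) -> V (scaleS 2 v') -> V (addS v v').
Proof.
move=> [_ [Hc _]] H1 H2.
have H : `|(2^-1 : K)| + `|(2^-1 : K)| <= 1.
  have E2 : (2^-1 : K) + 2^-1 = 1 by field.
  by rewrite ger0_norm ?invr_ge0 ?ler0n // E2.
have := Hc _ _ _ _ H1 H2 H; congr V; apply: functional_extensionality => eta.
by rewrite /addS /scaleS !mulrA mulVf ?pnatr_eq0 // !mul1r.
Qed.

Lemma LC_scale2 (v : series) : LC (scaleS 2 v) -> LC v.
Proof.
move=> H; have := LC_comb (2^-1) 0 H H; congr LC; apply: functional_extensionality => eta.
by rewrite /addS /scaleS mul0r addr0 mulrA mulVf ?pnatr_eq0 // mul1r.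
Qed.

Lemma LC_add (a b : series) : LC a -> LC b -> LC (addS a b).
Proof.
move=> Ha Hb; have := LC_comb 1 1 Ha Hb; congr LC; apply: functional_extensionality => eta.
by rewrite /addS /scaleS !mul1r.
Qed.

Lemma zn_half (V : series -> Prop) : silva_zero_nbhd V -> silva_zero_nbhd (fun v => V (scaleS 2 v)).
Proof.
move=> HV; have [HL [Hc Hb]] := HV; split; [|split].
- by move=> v /HL /LC_scale2.
- move=> c d a b Hc1 Hd1 Hab; have := Hc _ _ _ _ Hc1 Hd1 Hab; congr V.
  apply: functional_extensionality => eta; rewrite /addS /scaleS; ring.
- move=> M M0; have [r r0 Hr] := Hb M M0; exists (r / 2); first by rewrite divr_gt0.
  move=> c Hc'; apply: Hr => eta; rewrite /scaleS normrM ger0_norm ?ler0n //.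
  rewrite -ler_pdivlMl ?ltr0n //; apply: le_trans (Hc' eta) _.
  by rewrite le_eqVlt; apply/orP; left; apply/eqP; ring.
Qed.

Definition Oset (W : series -> Prop) (c : series) : series -> Prop := fun d =>
  LC d /\ exists V', silva_zero_nbhd V' /\ forall v, V' v -> W (fun eta => d eta + v eta - c eta).

Lemma Oset_open W c : silva_zero_nbhd W -> LC c -> silva_open (Oset W c) /\ Oset W c c.
Proof.
move=> HW Lc; split; last first.
  split => //; exists W; split => // v Wv.
  suff -> : (fun eta => c eta + v eta - c eta) = v by [].
  by apply: functional_extensionality => eta; rewrite addrAC subrr add0r.
split; first by move=> d [].
move=> d [Ld [V' [HV' H']]]; exists (fun v => V' (scaleS 2 v)); split; first exact: zn_half.
move=> v Hv; split.
  apply: LC_add => //; apply: LC_scale2; exact: HV'.1 _ Hv.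
exists (fun v => V' (scaleS 2 v)); split; first exact: zn_half.
move=> v' Hv'; have := H' _ (zn_half_add HV' Hv Hv'); congr W.
apply: functional_extensionality => eta; rewrite /addS; ring.
Qed.

End Topo2.

Section Main.
Variables (K : numFieldType) (m : nat).
Local Notation T := ('I_m.+1).
Local Notation word := (seq T).
Local Notation series := (series K m).

Lemma bernoulli (b : K) n : 1 <= b -> 1 + n%:R * (b - 1) <= b ^+ n.
Proof.
move=> b1; have b0 : 0 <= b by apply: le_trans b1.
elim: n => [|n IH]; first by rewrite mul0r addr0 expr0.
apply: (@le_trans _ _ (b * (1 + n%:R * (b - 1)))); last by rewrite exprS ler_wpM2l.
rewrite -subr_ge0.
have -> : b * (1 + n%:R * (b - 1)) - (1 + n.+1%:R * (b - 1)) = n%:R * (b - 1) ^+ 2.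
  by rewrite -addn1 natrD; ring.
by rewrite mulr_ge0 // exprn_ge0 // subr_ge0.
Qed.

Lemma zero_bound M r : 0 <= M -> 0 <= r -> normM_le M (fun _ : word => 0 : K) r.
Proof. by move=> M0 r0 eta; rewrite normr0 mulr_ge0 // mulr_ge0 // exprn_ge0. Qed.

Definition cut (a : nat -> series) (N p : nat) : series := if (p < N)%N then a p else (fun _ => 0).

Lemma part3 (archK : forall M : K, 0 < M -> exists n : nat, M <= n%:R) :
  silva_continuous_on (@LCunit K m) (@shinv K m).
Proof.
move=> c Uc O [OLC Oopen] Oc.
have [V [[VLC [Vconv Vball]] VO]] := Oopen _ Oc.
have c0n := LCunit_c0 Uc.
have [[Mc [Mc0 [Rc HRc]]] _] := Uc.
have Rc0 := normM_le_r0 HRc.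
set C1 := Rc + 1; have C10 : 0 < C1 by rewrite ltr_wpDl.
set g := `|c [::]| / 2; have g0 : 0 < g by rewrite divr_gt0 ?normr_gt0.
have c0g : `|c [::]| = g + g by rewrite /g; field.
set be := 1 + 4 * (C1 / g).
have be1 : 1 <= be by rewrite lerDl mulr_ge0 // divr_ge0 // ltW.
have be0 : 0 < be by apply: lt_le_trans be1.
set Mw := fun p : nat => be ^+ p * Mc.
have Mw0 : forall p, 0 < Mw p by move=> p; rewrite mulr_gt0 // exprn_gt0.
have MwS : forall p, be * Mw p = Mw p.+1 by move=> p; rewrite /Mw exprS mulrA.
have Mwle : forall p q, (p <= q)%N -> Mw p <= Mw q.
  move=> p q H; apply: ler_wpM2r; [exact: ltW | exact: (ler_weXn2l be1 H)].
have Mcle : forall p, Mc <= Mw p by move=> p; rewrite /Mw ler_pMl // exprn_ege1.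
set L := Lc C1 g.
have L0 : 0 < L.
  rewrite /L /Lc ltr_wpDr // ?divr_gt0 ?exprn_gt0 //.
  by rewrite !divr_ge0 ?mulr_ge0 ?addr_ge0 ?divr_ge0 ?invr_ge0 ?exprn_ge0 ?(ltW g0) ?(ltW C10).
have epsP : forall j : nat, {r : K | 0 < r /\ forall d, normM_le (Mw j.+1) d r -> V d}.
  move=> j; apply: constructive_indefinite_description.
  have [r r0 Hr] := Vball (Mw j.+1) (Mw0 _); by exists r.
set eps := fun j => sval (epsP j).
have eps0 : forall j, 0 < eps j by move=> j; rewrite /eps; case: (epsP j) => r [].
have epsV : forall j d, normM_le (Mw j.+1) d (eps j) -> V d.
  by move=> j; rewrite /eps; case: (epsP j) => r [].
set g' := g / (1 + g).
have g'0 : 0 < g' by rewrite divr_gt0 // addr_gt0.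
have g'g : g' <= g by rewrite ler_pdivrMr ?addr_gt0 // ler_pMr // lerDl ltW.
have g'1 : g' <= 1 by rewrite ler_pdivrMr ?addr_gt0 // mul1r lerDr.
set dl := fun j => eps j / L * g' / (1 + eps j / L).
have eL0 : forall j, 0 < eps j / L by move=> j; rewrite divr_gt0.
have dl0 : forall j, 0 < dl j.
  by move=> j; apply: divr_gt0; [exact: mulr_gt0 (eL0 j) g'0 | exact: addr_gt0 ltr01 (eL0 j)].
have dle : forall j, dl j <= eps j / L.
  move=> j; rewrite /dl ler_pdivrMr ?addr_gt0 //.
  by apply: ler_wpM2l; [exact: ltW | apply: (le_trans g'1); rewrite lerDl ltW].
have dlg : forall j, dl j <= g'.
  move=> j; rewrite /dl ler_pdivrMr ?addr_gt0 // mulrC ler_wpM2l ?ltW //.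
  by rewrite ltrDr ltr01.
have be1' : 0 < be - 1.
  by rewrite /be addrAC subrr add0r mulr_gt0 // divr_gt0.
pose W := fun w : series => exists N (a : nat -> series) (t : nat -> K),
  (forall p, 0 <= t p) /\ (forall p, normM_le (Mw p) (a p) (t p)) /\
  \sum_(p < N) t p / dl p <= 1 /\ forall eta, w eta = \sum_(p < N) a p eta.
have HW : silva_zero_nbhd W.
  split; [|split].
  - move=> w [N [a [t [t0 [Ha [Hs Hw]]]]]].
    exists (Mw N); split => //; exists (\sum_(p < N) t p).
    apply: (normM_le_ext (fun eta => esym (Hw eta))).
    apply: normM_le_sum => p Hp.
    exact: (normM_le_Mmono (ltW (Mw0 p)) (Mwle _ _ (ltnW Hp)) (Ha p)).
  - move=> w1 w2 al bt [N1 [a1 [t1 [t10 [Ha1 [Hs1 Hw1]]]]]] [N2 [a2 [t2 [t20 [Ha2 [Hs2 Hw2]]]]]] Hab.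
    exists (maxn N1 N2), (fun p => addS (scaleS al (cut a1 N1 p)) (scaleS bt (cut a2 N2 p))),
      (fun p => `|al| * (if (p < N1)%N then t1 p else 0) + `|bt| * (if (p < N2)%N then t2 p else 0)).
    split; [|split; [|split]].
    + by move=> p; rewrite addr_ge0 // mulr_ge0 //; case: ifP.
    + move=> p; apply: (normM_le_add (fun eta => erefl)); apply: normM_le_scale; rewrite /cut;
        case: ifP => _ //; exact: zero_bound (ltW (Mw0 p)) (lexx 0).
    + under eq_bigr do rewrite mulrDl.
      rewrite big_split /=.
      have E1 : \sum_(p < maxn N1 N2) `|al| * (if (p < N1)%N then t1 p else 0) / dl p =
                `|al| * \sum_(p < N1) t1 p / dl p.
        rewrite -(sum_cut (fun p => t1 p / dl p) (leq_maxl N1 N2)) mulr_sumr.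
        by apply: eq_bigr => p _; case: ifP => _; [rewrite mulrA | rewrite mulr0 !mul0r].
      have E2 : \sum_(p < maxn N1 N2) `|bt| * (if (p < N2)%N then t2 p else 0) / dl p =
                `|bt| * \sum_(p < N2) t2 p / dl p.
        rewrite -(sum_cut (fun p => t2 p / dl p) (leq_maxr N1 N2)) mulr_sumr.
        by apply: eq_bigr => p _; case: ifP => _; [rewrite mulrA | rewrite mulr0 !mul0r].
      rewrite E1 E2; apply: le_trans Hab; apply: lerD; exact: ler_piMr.
    + move=> eta; rewrite /addS /scaleS Hw1 Hw2 big_split /= -!mulr_sumr.
      rewrite -(sum_cut (fun p => a1 p eta) (leq_maxl N1 N2)).
      rewrite -(sum_cut (fun p => a2 p eta) (leq_maxr N1 N2)).
      by congr (_ * _ + _ * _); apply: eq_bigr => p _; rewrite /cut; case: ifP.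
  - move=> M M0.
    have [n Hn] := archK _ (divr_gt0 M0 (mulr_gt0 be1' Mc0 : 0 < (be - 1) * Mc)).
    have HM : M <= Mw n.
      move: Hn; rewrite ler_pdivrMr ?mulr_gt0 // => Hn; apply: le_trans Hn _.
      rewrite /Mw mulrA; apply: ler_wpM2r; first exact: ltW.
      apply: le_trans (bernoulli n be1).
      by rewrite lerDr.
    exists (dl n) => // w Hw.
    exists n.+1, (fun q => if q == n then w else (fun _ => 0)), (fun q => if q == n then dl n else 0).
    split; [|split; [|split]].
    + by move=> q; case: ifP => // _; apply: ltW.
    + move=> q; case: eqP => [->|_]; last exact: zero_bound (ltW (Mw0 q)) (lexx 0).
      exact: normM_le_Mmono (ltW M0) HM Hw.
    + rewrite big_ord_recr /= eqxx big1 ?add0r ?mulfV ?gt_eqF //.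
      by move=> q _; rewrite (ltn_eqF (ltn_ord q)) mul0r.
    + move=> eta; rewrite big_ord_recr /= eqxx big1 ?add0r //.
      by move=> q _; rewrite (ltn_eqF (ltn_ord q)).
have Hmain : forall d, W (fun eta => d eta - c eta) -> V (fun eta => shinv d eta - shinv c eta).
  move=> d [N [a [t [t0 [Ha [Hs Hw]]]]]].
  pose xs := fun (j : nat) (eta : word) => c eta + \sum_(p < j) a p eta.
  have HxsN : xs N = d.
    by apply: functional_extensionality => eta; rewrite /xs -Hw addrC subrK.
  have Hxs0 : xs 0%N = c.
    by apply: functional_extensionality => eta; rewrite /xs big_ord0 addr0.
  have Hts : \sum_(p < N) t p <= g'.
    apply: (@le_trans _ _ (\sum_(p < N) g' * (t p / dl p))).
      apply: ler_sum => p _.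
      rewrite {1}(_ : t p = dl p * (t p / dl p)); last by rewrite mulrC divfK ?gt_eqF.
      by apply: ler_wpM2r; [exact: divr_ge0 (t0 p) (ltW (dl0 p)) | exact: dlg].
    by rewrite -mulr_sumr; apply: ler_piMr; [exact: ltW|].
  have Htj : forall j, (j <= N)%N -> \sum_(p < j) t p <= g'.
    by move=> j Hj; apply: le_trans (sum_prefix t0 Hj) Hts.
  have Hsb : forall j k, (j <= k.+1)%N -> normM_le (Mw k) (fun eta => \sum_(p < j) a p eta) (\sum_(p < j) t p).
    move=> j k Hj; apply: normM_le_sum => p Hp.
    have Hpk : (p <= k)%N by rewrite -ltnS (leq_trans Hp Hj).
    exact: (normM_le_Mmono (ltW (Mw0 p)) (Mwle _ _ Hpk) (Ha p)).
  have Hxb : forall j k, (j <= N)%N -> (j <= k.+1)%N -> normM_le (Mw k) (xs j) C1.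
    move=> j k Hj Hjk; apply: (normM_le_mono (ltW (Mw0 k)) _
       (normM_le_add (a := c) (b := fun eta => \sum_(p < j) a p eta) (fun eta => erefl) _ (Hsb j k Hjk))).
      by apply: lerD => //; apply: le_trans (Htj j Hj) g'1.
    exact: (normM_le_Mmono (ltW Mc0) (Mcle k) HRc).
  have Hxg : forall j, (j <= N)%N -> g <= `|xs j [::]|.
    move=> j Hj.
    have Hs0 : `|\sum_(p < j) a p [::]| <= g.
      have := Hsb j j (leqnSn j) [::]; rewrite /= expr0 !mulr1 => H.
      by apply: le_trans H (le_trans (Htj j Hj) g'g).
    apply: le_trans (lerB_normD _ _); rewrite c0g lerBrDr lerD2l //.
  have Hdiff : forall j, normM_le (Mw j) (fun u => xs j.+1 u - xs j u) (t j).
    move=> j; apply: normM_le_ext (Ha j) => eta.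
    by rewrite /xs big_ord_recr /=; ring.
  have Hb : forall j, (j < N)%N ->
      normM_le (Mw j.+1) (fun eta => shinv (xs j.+1) eta - shinv (xs j) eta) (t j * L).
    move=> j Hj; rewrite -MwS.
    have H := (lip (Mw0 j) C10 g0 (t0 j) (Hxb j j (ltnW Hj) (leqnSn j)) (Hxb j.+1 j Hj (leqnn _)) (Hdiff j)
              (Hxg j (ltnW Hj)) (Hxg j.+1 Hj)).
    exact H.
  have := @Vcomb _ _ V (fun j => Mw j.+1) eps Vconv epsV eps0 (fun j => ltW (Mw0 j.+1)) N
     (fun j => cut (fun j => fun eta => shinv (xs j.+1) eta - shinv (xs j) eta) N j)
     (fun j => if (j < N)%N then t j * L / eps j else 0).
  have Hfin : forall eta, \sum_(j < N) cut (fun j => fun eta => shinv (xs j.+1) eta - shinv (xs j) eta) N j eta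
      = shinv d eta - shinv c eta.
    move=> eta; under eq_bigr => j _ do rewrite /cut ltn_ord.
    rewrite -(big_mkord xpredT (fun j => shinv (xs j.+1) eta - shinv (xs j) eta)).
    by rewrite telescope_sumr // HxsN Hxs0.
  have -> : (fun eta => \sum_(j < N) cut (fun j => fun eta => shinv (xs j.+1) eta - shinv (xs j) eta) N j eta)
     = (fun eta => shinv d eta - shinv c eta) by apply: functional_extensionality.
  apply.
  - by move=> j; case: ifP => // _; exact: divr_ge0 (mulr_ge0 (t0 j) (ltW L0)) (ltW (eps0 j)).
  - move=> j; rewrite /cut; case: ifP => Hj.
      by rewrite mulfVK ?gt_eqF //; exact: Hb.
    by rewrite mul0r; exact: zero_bound (ltW (Mw0 j.+1)) (lexx 0).
  - apply: le_trans Hs; apply: ler_sum => j _; rewrite ltn_ord -mulrA.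
    apply: ler_wpM2l => //.
    rewrite -invf_div lef_pV2 ?posrE //; exact: dle.
exists (Oset W c).
have [HO HOc] := Oset_open HW Uc.1.
split => //; split => //.
move=> d Ud [Ld [V' [HV' H']]].
have Hw0 := H' _ (zn_zero HV').
have Hw : W (fun eta => d eta - c eta).
  have E : (fun eta => d eta + 0 - c eta) = (fun eta => d eta - c eta).
    by apply: functional_extensionality => eta; rewrite addr0.
  by rewrite -E.
have := VO _ (Hmain d Hw).
suff -> : addS (shinv c) (fun eta => shinv d eta - shinv c eta) = shinv d by [].
by apply: functional_extensionality => eta; rewrite /addS addrC subrK.
Qed.

End Main.

Lemma prop_generic (K : numFieldType) (m : nat) :
  (forall M : K, 0 < M -> exists n : nat, M <= n%:R) -> prop3p6_statement K m.
Proof.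
move=> archK; split; [exact: part1 | split; [exact: part2 | exact: part3]].
Qed.

Lemma ReIm_nat (R : realType) n : complex.Re (n%:R : complex R) = n%:R /\ complex.Im (n%:R : complex R) = 0.
Proof.
have ReD : forall x y : complex R, complex.Re (x + y) = complex.Re x + complex.Re y by move=> [a b] [c d].
have ImD : forall x y : complex R, complex.Im (x + y) = complex.Im x + complex.Im y by move=> [a b] [c d].
elim: n => [|n [IH1 IH2]] //.
rewrite -addn1 natrD ReD ImD IH1 IH2.
have R1 : complex.Re (1 : complex R) = 1 by [].
have I1 : complex.Im (1 : complex R) = 0 by [].
by rewrite R1 I1 natrD addr0.
Qed.

Lemma archR (R : realType) : forall M : R, 0 < M -> exists n : nat, M <= n%:R.
Proof. move=> M M0; exists (Num.Def.archi_bound M); exact: ltW (archi_boundP (ltW M0)). Qed.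

Lemma archC (R : realType) : forall M : complex R, 0 < M -> exists n : nat, M <= n%:R.
Proof.
move=> M; rewrite ltcE => /andP [/eqP HI HR].
have [n Hn] := archR HR; exists n; rewrite lecE.
have [E1 E2] := ReIm_nat R n.
by rewrite E1 E2 HI /= eqxx.
Qed.

Theorem proposition3p6 (R : realType) (m : nat) :
  prop3p6_statement R m /\ prop3p6_statement (complex R) m.
Proof.
split; apply: prop_generic; [exact: archR | exact: archC].
Qed.
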